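(* Let $(E,j)$, $(\tilde E,\tilde j)$ be soft inductive systems over the same directed set and $T_\bullet$ a uniformly bounded net of bounded linear operators $T_n:E_n\to\tilde E_n$. (1) If $T_\bullet$ maps every $j$-basic net to a $\tilde j$-convergent net, then $T_\bullet$ is $j\tilde j$-convergent. (2) $T_\bullet$ is $j\tilde j$-convergent if and only if $\lim_{n\gg m}\|(\tilde j_{nm}T_m-T_nj_{nm})x_m\|=0$ for every $x_\bullet\in C(E,j)$ (where $x_m$ is the $m$-th entry of $x_\bullet$). (3) If $T_\bullet$ is $j\tilde j$-convergent and $S_\bullet$ is a uniformly bounded $\tilde j\hat j$-convergent net of operators $S_n:\tilde E_n\to\hat E_n$ into a soft inductive system $(\hat E,\hat j)$, then $(S_nT_n)_n$ is $j\hat j$-convergent and $(ST)_\infty=S_\infty T_\infty$.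
   Context: Let $(N,\le)$ be a directed set; $\lim_{n\gg m}a_{nm}:=\lim_m\limsup_n a_{nm}$. A soft inductive system $(E,j)$: Banach spaces $E_n$, linear contractions $j_{nm}:E_m\to E_n$ ($n\ge m$), $j_{nn}=\mathrm{id}$, $j_{nm}=0$ if $n\not\ge m$, with $\lim_{n\gg m}\|(j_{nl}-j_{nm}j_{ml})x_l\|=0$ for all $l,x_l$. Nets $x_\bullet=(x_n)$, $x_n\in E_n$; seminorm $|x_\bullet|=\limsup_n\|x_n\|$. Basic nets $j_{\bullet m}x_m=(j_{nm}x_m)_n$. $C(E,j)$: seminorm closure of the basic nets in the space of uniformly bounded nets; $C_0(E,j)$: nets with $\|x_n\|\to0$; $E_\infty=C(E,j)/C_0(E,j)$. A uniformly bounded net $T_\bullet$ is $j\tilde j$-convergent if $(T_nx_n)\in C(\tilde E,\tilde j)$ for all $x_\bullet\in C(E,j)$; its limit $T_\infty:E_\infty\to\tilde E_\infty$ is defined by $T_\infty(j\text{-}\lim_nx_n)=\tilde j\text{-}\lim_nT_nx_n$. *)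

(* Defs.v *)
From HB Require Import structures.
From mathcomp Require Import all_boot all_order all_algebra.
From mathcomp Require Import all_classical all_reals all_analysis.
Import Order.TTheory GRing.Theory Num.Theory.
Import numFieldNormedType.Exports.

Set Implicit Arguments.
Unset Strict Implicit.
Unset Printing Implicit Defensive.

Local Open Scope ring_scope.
Local Open Scope classical_set_scope.

Section SoftInductive.
Context {R : realType} {N : Type} (le : N -> N -> Prop).

Definition directed : Prop :=
  [/\ (exists n : N, True),
      (forall n, le n n),
      (forall a b c, le a b -> le b c -> le a c) &
      (forall a b, exists c, le a c /\ le b c)].

Definition net_limsup (a : N -> \bar R) : \bar R :=
  ereal_inf (range (fun m => ereal_sup [set a n | n in le m])).

Definition enet_to0 (b : N -> \bar R) : Prop :=
  forall e : R, 0 < e -> exists m0, forall m, le m0 m -> (`|b m| <= e%:E)%E.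

Definition net_to0 (b : N -> R) : Prop :=
  forall e : R, 0 < e -> exists m0, forall m, le m0 m -> `|b m| <= e.

(* lim_{n >> m} a_{nm} = 0, i.e. lim_m limsup_n a_{nm} = 0 *)
Definition dlim0 (a : N -> N -> R) : Prop :=
  enet_to0 (fun m => net_limsup (fun n => (a n m)%:E)).

Definition soft_system {E : N -> completeNormedModType R}
  (j : forall n m, E m -> E n) : Prop :=
  [/\ (forall n m, linear (j n m)),
      (forall n m (x : E m), `|j n m x| <= `|x|),
      (forall n (x : E n), j n n x = x),
      (forall n m, ~ le m n -> forall x : E m, j n m x = 0) &
      (forall l (x : E l), dlim0 (fun n m => `|j n l x - j n m (j m l x)|))].

Definition ubounded {E : N -> completeNormedModType R} (x : forall n, E n) : Prop :=
  exists M : R, forall n, `|x n| <= M.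

(* C(E,j): seminorm closure of the basic nets j_{. m} x_m within the
   uniformly bounded nets; seminorm |x| = limsup_n ||x_n|| *)
Definition inC {E : N -> completeNormedModType R}
  (j : forall n m, E m -> E n) (x : forall n, E n) : Prop :=
  ubounded x /\
  forall e : R, 0 < e -> exists m (xm : E m),
    (net_limsup (fun n => (`|x n - j n m xm|)%:E) < e%:E)%E.

Definition inC0 {E : N -> completeNormedModType R} (x : forall n, E n) : Prop :=
  ubounded x /\ net_to0 (fun n => `|x n|).

(* the element j-lim_n x_n of E_infty = C(E,j)/C_0(E,j), as an equivalence class *)
Definition Einf_class {E : N -> completeNormedModType R}
  (j : forall n m, E m -> E n) (x : forall n, E n) : set (forall n, E n) :=
  [set y | inC j y /\ inC0 (fun n => x n - y n)].

Definition op_net {E F : N -> completeNormedModType R}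
  (T : forall n, E n -> F n) : Prop :=
  (forall n, linear (T n)) /\ exists M : R, forall n (x : E n), `|T n x| <= M * `|x|.

Definition jconv {E F : N -> completeNormedModType R}
  (j : forall n m, E m -> E n) (jt : forall n m, F m -> F n)
  (T : forall n, E n -> F n) : Prop :=
  forall x, inC j x -> inC jt (fun n => T n (x n)).

Definition Tinf {E F : N -> completeNormedModType R}
  (jt : forall n m, F m -> F n) (T : forall n, E n -> F n)
  (K : set (forall n, E n)) : set (forall n, F n) :=
  [set y | exists2 x, K x & Einf_class jt (fun n => T n (x n)) y].

End SoftInductive.

(* Main.v *)
Require Import Defs.
From HB Require Import structures.
From mathcomp Require Import all_boot all_order all_algebra.
From mathcomp Require Import all_classical all_reals all_analysis.
From mathcomp Require Import lra.
Import Order.TTheory GRing.Theory Num.Theory.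
Import numFieldNormedType.Exports.
Local Open Scope ring_scope.
Local Open Scope classical_set_scope.

Section S.
Context {R : realType} {N : Type} (le : N -> N -> Prop) (hN : directed le).

Definition EV (b : N -> R) (e : R) := exists m0, forall n, le m0 n -> b n <= e.
Definition DL (a : N -> N -> R) :=
  forall e : R, 0 < e -> exists m0, forall m, le m0 m -> EV (fun n => a n m) e.

Lemma le_refl' n : le n n. Proof. by case: hN. Qed.
Lemma le_trans' a b c : le a b -> le b c -> le a c.
Proof. by case: hN => _ _ H _; apply: H. Qed.
Arguments le_trans' {a b c}.
Lemma dir_up a b : exists c, le a c /\ le b c.
Proof. by case: hN => _ _ _ H; apply: H. Qed.

Lemma EV2 b1 b2 e1 e2 : EV b1 e1 -> EV b2 e2 ->
  exists m0, forall n, le m0 n -> b1 n <= e1 /\ b2 n <= e2.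
Proof.
case=> m1 h1 [m2 h2]; case: (dir_up m1 m2) => m [hm1 hm2].
exists m => n hn; split; [apply: h1 | apply: h2]; exact: le_trans' hn.
Qed.

Lemma ev_of_limsup (a : N -> R) (e : R) :
  (net_limsup le (fun n => (a n)%:E) < e%:E)%E -> EV a e.
Proof.
move=> /ereal_inf_lt [y [m _ <-]] hy; exists m => n hn.
have h : ((a n)%:E <= ereal_sup [set (a k)%:E | k in le m])%E.
  by apply: ereal_sup_ubound; exists n.
rewrite -lee_fin; exact: le_trans h (ltW hy).
Qed.

Lemma limsup_of_ev (a : N -> R) (e : R) :
  EV a e -> (net_limsup le (fun n => (a n)%:E) <= e%:E)%E.
Proof.
case=> m0 h.
apply: (@le_trans _ _ (ereal_sup [set (a n)%:E | n in le m0])).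
  by apply: ereal_inf_lbound; exists m0.
apply/ereal_supP => y [n hn <-]; rewrite lee_fin; exact: h.
Qed.

Lemma limsup_ge0 (a : N -> R) : (forall n, 0 <= a n) ->
  (0 <= net_limsup le (fun n => (a n)%:E))%E.
Proof.
move=> h; apply/ereal_infP => y [m _ <-].
apply: (@le_trans _ _ (a m)%:E); first by rewrite lee_fin.
by apply: ereal_sup_ubound; exists m => //; apply: le_refl'.
Qed.

Lemma dlim0_DL a : dlim0 le a -> DL a.
Proof.
move=> h e e0; have e20 : 0 < e / 2 by lra.
case: (h _ e20) => m0 hm; exists m0 => m hm0.
apply: ev_of_limsup; apply: le_lt_trans (lee_abs _) _.
apply: le_lt_trans (hm _ hm0) _; rewrite lte_fin; lra.
Qed.

Lemma DL_dlim0 a : (forall n m, 0 <= a n m) -> DL a -> dlim0 le a.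
Proof.
move=> h0 h e e0; case: (h _ e0) => m0 hm; exists m0 => m hm0.
rewrite gee0_abs; first exact: limsup_of_ev (hm _ hm0).
exact: limsup_ge0.
Qed.

Arguments EV2 {b1 b2 e1 e2}.
Arguments ev_of_limsup {a e}.
Arguments limsup_of_ev {a e}.
Arguments dlim0_DL {a}.
Arguments DL_dlim0 {a}.

Lemma inC_ev {E : N -> completeNormedModType R} (j : forall n m, E m -> E n) x :
  inC le j x -> ubounded x /\
  forall e : R, 0 < e -> exists m (xm : E m), EV (fun n => `|x n - j n m xm|) e.
Proof.
case=> hb h; split => // e e0; case: (h _ e0) => m [xm hm].
by exists m, xm; apply: ev_of_limsup.
Qed.

Lemma ev_inC {E : N -> completeNormedModType R} (j : forall n m, E m -> E n) x :
  ubounded x ->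
  (forall e : R, 0 < e -> exists m (xm : E m), EV (fun n => `|x n - j n m xm|) e) ->
  inC le j x.
Proof.
move=> hb h; split => // e e0; have e20 : 0 < e / 2 by lra.
case: (h _ e20) => m [xm hm]; exists m, xm.
have := limsup_of_ev hm; move=> /le_lt_trans; apply; rewrite lte_fin; lra.
Qed.

Lemma linB {U V : completeNormedModType R} (f : U -> V) : linear f ->
  forall u v, f (u - v) = f u - f v.
Proof.
move=> hf u v; have := hf (-1) v u; rewrite !scaleN1r => H.
by rewrite addrC H addrC.
Qed.

Lemma linD {U V : completeNormedModType R} (f : U -> V) : linear f ->
  forall u v, f (u + v) = f u + f v.
Proof. by move=> hf u v; have := hf 1 u v; rewrite !scale1r. Qed.

Lemma op_pos {E F : N -> completeNormedModType R} (T : forall n, E n -> F n) :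
  op_net T -> (forall n, linear (T n)) /\
  exists M : R, 0 < M /\ forall n (x : E n), `|T n x| <= M * `|x|.
Proof.
case=> hl [M hM]; split => //; exists (Num.max M 0 + 1); split.
  by apply: (@lt_le_trans _ _ 1); [lra | rewrite lerDr le_max lexx orbT].
move=> n x; apply: le_trans (hM n x) _; apply: ler_wpM2r => //.
by apply: (@le_trans _ _ (Num.max M 0)); [rewrite le_max lexx | rewrite lerDl].
Qed.

Arguments op_pos {E F T}.
Arguments inC_ev {E j x}.
Arguments ev_inC {E j x}.

Lemma inC_DL {E : N -> completeNormedModType R} (j : forall n m, E m -> E n)
  (hj : soft_system le j) x : inC le j x -> DL (fun n m => `|x n - j n m (x m)|).
Proof.
move=> /inC_ev [_ hx] e e0; have e30 : 0 < e / 3 by lra.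
case: (hx _ e30) => l [xl [n1 hn1]].
case: hj => hjl hjc _ _ hsoft.
case: (dlim0_DL (hsoft l xl) _ e30) => m1 hm1.
case: (dir_up n1 m1) => m0 [h1 h2]; exists m0 => m hm.
have hmn1 : le n1 m by exact: le_trans' hm.
have hmm1 : le m1 m by exact: le_trans' hm.
have [n2 hn2] := EV2 (hm1 _ hmm1) (ex_intro _ n1 hn1).
exists n2 => n hn; case: (hn2 _ hn) => /= b1 b2.
have b3 : `|j n m (j m l xl) - j n m (x m)| <= e / 3.
  rewrite -linB //; apply: le_trans (hjc _ _ _) _.
  by rewrite distrC; apply: hn1.
apply: le_trans (ler_distD (j n l xl) _ _) _.
apply: le_trans (lerD (lexx _) (ler_distD (j n m (j m l xl)) _ _)) _.
lra.
Qed.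

Lemma pos_scale (M e : R) : 0 < M -> 0 < e ->
  exists d, 0 < d /\ d + M * d = e.
Proof.
move=> M0 e0; exists (e / (1 + M)); split; first by apply: divr_gt0; lra.
have h1 : 1 + M != 0 by rewrite gt_eqF //; lra.
by rewrite -[X in X + _]mul1r -mulrDl mulrC divfK.
Qed.

Arguments inC_DL {E j} hj {x}.
Arguments pos_scale {M e}.

Lemma part2a {E F : N -> completeNormedModType R}
  (j : forall n m, E m -> E n) (jt : forall n m, F m -> F n)
  (hj : soft_system le j) (hjt : soft_system le jt)
  (T : forall n, E n -> F n) (hT : op_net T) :
  jconv le j jt T -> forall x, inC le j x ->
  dlim0 le (fun n m => `|jt n m (T m (x m)) - T n (j n m (x m))|).
Proof.
move=> hc x hx; have [hTl [M [M0 hM]]] := op_pos hT.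
apply: DL_dlim0 => [n m|e e0]; first exact: normr_ge0.
have [d [d0 hd]] := pos_scale M0 e0.
have hTx := inC_DL hjt (hc x hx); have hx' := inC_DL hj hx.
case: (hTx _ d0) => m1 h1; case: (hx' _ d0) => m2 h2.
case: (dir_up m1 m2) => m0 [hm1 hm2]; exists m0 => m hm.
have [n0 hn0] := EV2 (h1 m (le_trans' hm1 hm)) (h2 m (le_trans' hm2 hm)).
exists n0 => n hn; case: (hn0 n hn) => /= b1 b2.
have b3 : `|T n (x n) - T n (j n m (x m))| <= M * d.
  by rewrite -linB //; apply: le_trans (hM _ _) _; apply: ler_wpM2l => //; lra.
rewrite distrC in b1.
apply: le_trans (ler_distD (T n (x n)) _ _) _; lra.
Qed.

Lemma op_bounded {E F : N -> completeNormedModType R} (T : forall n, E n -> F n)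
  x : op_net T -> ubounded x -> ubounded (fun n => T n (x n)).
Proof.
move=> hT [B hB]; have [_ [M [M0 hM]]] := op_pos hT.
exists (M * B) => n; apply: le_trans (hM _ _) _; apply: ler_wpM2l => //; lra.
Qed.

Arguments op_bounded {E F T x}.

Lemma part2b {E F : N -> completeNormedModType R}
  (j : forall n m, E m -> E n) (jt : forall n m, F m -> F n)
  (hj : soft_system le j)
  (T : forall n, E n -> F n) (hT : op_net T) :
  (forall x, inC le j x ->
    dlim0 le (fun n m => `|jt n m (T m (x m)) - T n (j n m (x m))|)) ->
  jconv le j jt T.
Proof.
move=> H x hx; have [hTl [M [M0 hM]]] := op_pos hT.
apply: ev_inC; first by apply: op_bounded => //; case: hx.
move=> e e0; have [d [d0 hd]] := pos_scale M0 e0.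
have hTx := dlim0_DL (H x hx); have hx' := inC_DL hj hx.
case: (hTx _ d0) => m1 h1; case: (hx' _ d0) => m2 h2.
case: (dir_up m1 m2) => m [hm1 hm2]; exists m, (T m (x m)).
have [n0 hn0] := EV2 (h1 m hm1) (h2 m hm2).
exists n0 => n hn; case: (hn0 n hn) => /= b1 b2.
have b3 : `|T n (x n) - T n (j n m (x m))| <= M * d.
  by rewrite -linB //; apply: le_trans (hM _ _) _; apply: ler_wpM2l => //; lra.
rewrite distrC in b1.
apply: le_trans (ler_distD (T n (j n m (x m))) _ _) _; lra.
Qed.

Lemma part1 {E F : N -> completeNormedModType R}
  (j : forall n m, E m -> E n) (jt : forall n m, F m -> F n)
  (T : forall n, E n -> F n) (hT : op_net T) :
  (forall m (xm : E m), inC le jt (fun n => T n (j n m xm))) ->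
  jconv le j jt T.
Proof.
move=> hb x hx; have [hTl [M [M0 hM]]] := op_pos hT.
have [hbx hxa] := inC_ev hx.
apply: ev_inC; first exact: op_bounded.
move=> e e0; have [d [d0 hd]] := pos_scale M0 e0.
case: (hxa d d0) => l [xl hl].
have [_ hTa] := inC_ev (hb l xl).
case: (hTa d d0) => m [ym hm]; exists m, ym.
have [n0 hn0] := EV2 hl hm.
exists n0 => n hn; case: (hn0 n hn) => /= b1 b2.
have b3 : `|T n (x n) - T n (j n l xl)| <= M * d.
  by rewrite -linB //; apply: le_trans (hM _ _) _; apply: ler_wpM2l => //; lra.
apply: le_trans (ler_distD (T n (j n l xl)) _ _) _; lra.
Qed.

Lemma inC0_eq {E : N -> completeNormedModType R} (x y : forall n, E n) :
  inC0 le x -> (forall n, x n = y n) -> inC0 le y.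
Proof.
move=> [[B hB] h] e; split; first by exists B => n; rewrite -e.
move=> eps eps0; case: (h eps eps0) => m hm; exists m => n hn; rewrite -e.
exact: hm.
Qed.

Arguments inC0_eq {E x y}.

Lemma inC0_zero {E : N -> completeNormedModType R} :
  inC0 le (fun n => (0 : E n)).
Proof.
split; first by exists 0 => n; rewrite normr0.
move=> e e0; have [n _] : exists n : N, True by case: hN.
by exists n => m _; rewrite normr0 normr0 ltW.
Qed.

Lemma inC0_add {E : N -> completeNormedModType R} (x y : forall n, E n) :
  inC0 le x -> inC0 le y -> inC0 le (fun n => x n + y n).
Proof.
move=> [[B1 hB1] h1] [[B2 hB2] h2]; split.
  exists (B1 + B2) => n; apply: le_trans (ler_normD _ _) _; exact: lerD.
move=> e e0; have e20 : 0 < e / 2 by lra.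
case: (h1 _ e20) => m1 hm1; case: (h2 _ e20) => m2 hm2.
case: (dir_up m1 m2) => m [a1 a2]; exists m => n hn.
have := hm1 n (le_trans' a1 hn); have := hm2 n (le_trans' a2 hn).
rewrite !normr_id => b2 b1.
apply: le_trans (ler_normD _ _) _; lra.
Qed.

Lemma inC0_op {E F : N -> completeNormedModType R} (S : forall n, E n -> F n)
  (x : forall n, E n) : op_net S -> inC0 le x -> inC0 le (fun n => S n (x n)).
Proof.
move=> hS [hb h]; have [_ [M [M0 hM]]] := op_pos hS; split.
  exact: op_bounded.
move=> e e0; have eM : 0 < e / M by apply: divr_gt0.
case: (h _ eM) => m hm; exists m => n hn; rewrite normr_id.
apply: le_trans (hM _ _) _; have := hm n hn; rewrite normr_id => b.
have -> : e = M * (e / M) by rewrite mulrC divfK // gt_eqF.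
idtac.
by rewrite ler_pM2l.
Qed.

Arguments inC0_add {E x y}.
Arguments inC0_op {E F S x}.

Lemma part3 {E F G : N -> completeNormedModType R}
  (j : forall n m, E m -> E n) (jt : forall n m, F m -> F n)
  (jh : forall n m, G m -> G n)
  (T : forall n, E n -> F n) (S : forall n, F n -> G n) :
  op_net S -> jconv le j jt T -> jconv le jt jh S ->
  jconv le j jh (fun n x => S n (T n x)) /\
  forall x, inC le j x ->
    Tinf le jh (fun n x => S n (T n x)) (Einf_class le j x)
    = Tinf le jh S (Tinf le jt T (Einf_class le j x)).
Proof.
move=> hS hT hSc; split; first by move=> x hx; apply: hSc; apply: hT.
move=> x _; have [hSl _] := op_pos hS.
apply/seteqP; split => y /=.
  case=> x' [hx'C hx'0] [hyC hy0].
  exists (fun n => T n (x' n)); last by split.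
  exists x' => //; split; first exact: hT.
  by apply: (inC0_eq inC0_zero) => n /=; rewrite subrr.
case=> z [x' hx' [hzC hz0]] [hyC hy0].
exists x' => //; split => //.
apply: (inC0_eq (inC0_add (inC0_op hS hz0) hy0)) => n /=.
by rewrite (linB _ (hSl n)) addrA subrK.
Qed.

End S.

Theorem mainTheorem9 (R : realType) (N : Type) (le : N -> N -> Prop)
  (hN : directed le)
  (E Et Eh : N -> completeNormedModType R)
  (j : forall n m, E m -> E n) (jt : forall n m, Et m -> Et n)
  (jh : forall n m, Eh m -> Eh n)
  (hj : soft_system le j) (hjt : soft_system le jt) (hjh : soft_system le jh)
  (T : forall n, E n -> Et n) (hT : op_net T) :
  [/\ ((forall m (xm : E m), inC le jt (fun n => T n (j n m xm))) ->
         jconv le j jt T),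
      (jconv le j jt T <->
         forall x, inC le j x ->
           dlim0 le (fun n m => `|jt n m (T m (x m)) - T n (j n m (x m))|)) &
      (forall S : forall n, Et n -> Eh n, op_net S ->
         jconv le j jt T -> jconv le jt jh S ->
         jconv le j jh (fun n x => S n (T n x)) /\
         forall x, inC le j x ->
           Tinf le jh (fun n x => S n (T n x)) (Einf_class le j x)
           = Tinf le jh S (Tinf le jt T (Einf_class le j x)))].
Proof.
split.
- exact: (part1 le hN j jt T hT).
- split; [exact: (part2a le hN j jt hj hjt T hT) | exact: (part2b le hN j jt hj T hT)].
- move=> S hS hTc hSc; exact: (part3 le hN j jt jh T S hS hTc hSc).
Qed.
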